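(* Let $G$ be a DAG or MAG on $\{Y,X_1,\dots,X_d\}$ ($d\ge1$) whose skeleton is the path $Y - X_d - X_{d-1} - \cdots - X_1$, with arbitrary edge orientations. Then $N_G=d+1$.
   Context: For $A\subseteq\{1,\dots,d\}$, $\mathbf{X}_A:=\{X_i:i\in A\}$. $\perp_G$ is d-separation (m-separation for a MAG). For $S',S''\subseteq\{1,\dots,d\}$, $S'\sim_G S''$ iff there exists $S_\cap\subseteq S'\cap S''$ with $Y\perp_G\mathbf{X}_{(S'\cup S'')\setminus S_\cap}\mid\mathbf{X}_{S_\cap}$ (separation from the empty set holds trivially); this is an equivalence relation, and $N_G$ denotes the number of its equivalence classes on the power set of $\{1,\dots,d\}$. *)

(* Defs.v *)
From mathcomp Require Import all_boot.
From mathcomp Require Import boolp.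

Set Implicit Arguments.
Unset Strict Implicit.
Unset Printing Implicit Defensive.

(* Vertices: 'I_d.+1; vertex 0 is Y, vertex i (1 <= i <= d) is X_i.
   A mixed graph is given by two relations:
     dir u v  : directed edge u -> v
     bi  u v  : bidirected edge u <-> v                                      *)

Section MixedGraph.
Variable (n : nat) (dir bi : rel 'I_n).

Definition adj (u v : 'I_n) : bool := [|| dir u v, dir v u | bi u v].

Definition arrowhead (u v : 'I_n) : bool := dir u v || bi u v.

Definition anc (u v : 'I_n) : bool := connect dir u v.

Definition wf_mixed : Prop :=
  [/\ forall u, ~~ adj u u,
      forall u v, bi u v = bi v u,
      forall u v, ~~ (dir u v && dir v u) &
      forall u v, ~~ (dir u v && bi u v)].

Definition is_path (x y : 'I_n) (p : seq 'I_n) : Prop :=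
  exists q, [/\ p = x :: q, last x q = y, path adj x q & uniq (x :: q)].

Definition collider (a c b : 'I_n) : bool := arrowhead a c && arrowhead b c.

Fixpoint triples_ok (P : 'I_n -> 'I_n -> 'I_n -> bool) (s : seq 'I_n) : bool :=
  match s with
  | a :: ((c :: b :: _) as s') => P a c b && triples_ok P s'
  | _ => true
  end.

Definition mconnecting (Z : {set 'I_n}) (p : seq 'I_n) : bool :=
  triples_ok (fun a c b =>
    if collider a c b then [exists z in Z, anc c z] else c \notin Z) p.

Definition msep (A B Z : {set 'I_n}) : Prop :=
  forall x y p, x \in A -> y \in B -> is_path x y p -> ~~ mconnecting Z p.

Definition acyclic : Prop := forall u v, dir u v -> ~~ anc v u.

Definition is_DAG : Prop :=
  [/\ wf_mixed, forall u v, ~~ bi u v & acyclic].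

(* ancestral: no directed cycle, no almost directed cycle
   (no undirected edges are present in this representation) *)
Definition ancestral : Prop :=
  acyclic /\ forall u v, bi u v -> ~~ anc u v.

Definition maximal : Prop :=
  forall u v, u != v -> ~~ adj u v ->
    exists Z : {set 'I_n}, [/\ u \notin Z, v \notin Z & msep [set u] [set v] Z].

Definition is_MAG : Prop := [/\ wf_mixed, ancestral & maximal].

End MixedGraph.

(* skeleton  Y - X_d - X_{d-1} - ... - X_1  on 'I_d.+1 (Y = 0) *)
Definition path_skel (d : nat) (u v : 'I_d.+1) : bool :=
  let a := nat_of_ord u in let b := nat_of_ord v in
  [|| (a == 0) && (b == d), (b == 0) && (a == d),
      (0 < a) && (b == a.+1) | (0 < b) && (a == b.+1)].

Definition Yv {d : nat} : 'I_d.+1 := ord0.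
(* index j : 'I_d stands for X_{j+1} *)
Definition Xv {d : nat} (j : 'I_d) : 'I_d.+1 := lift ord0 j.

Definition simG (d : nat) (dir bi : rel 'I_d.+1) (S1 S2 : {set 'I_d}) : Prop :=
  exists Sc : {set 'I_d},
    Sc \subset S1 :&: S2 /\
    msep dir bi [set Yv] (Xv @: ((S1 :|: S2) :\: Sc)) (Xv @: Sc).

Definition N_G (d : nat) (dir bi : rel 'I_d.+1) : nat :=
  #|[set [set T : {set 'I_d} | `[< simG dir bi S T >]] | S : {set 'I_d}]|.

(* Main.v *)
Require Import Defs.
From mathcomp Require Import all_boot.
From mathcomp Require Import boolp.
From mathcomp Require Import zify.
Set Implicit Arguments. Unset Strict Implicit. Unset Printing Implicit Defensive.

Definition Dset (d : nat) (Cs S : {set 'I_d}) : {set 'I_d} :=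
  [set j | (j \in S) != (j \in Cs)].
Definition keyn (d : nat) (Cs S : {set 'I_d}) : nat := \max_(j in Dset Cs S) j.+1.
Definition blk (d : nat) (Cs Sc : {set 'I_d}) (a : 'I_d) : bool :=
  [exists j : 'I_d, (a < j) && ((j \in Sc) != (j \in Cs))].

Lemma maxle (d : nat) (A B : {set 'I_d}) (M : 'I_d) : M \in B ->
  (forall j : 'I_d, M < j -> (j \in A) = (j \in B)) ->
  \max_(j in A) j.+1 <= \max_(j in B) j.+1.
Proof.
move=> MB E; apply/bigmax_leqP => j jA.
case: (ltnP M j) => h; first by apply: (leq_bigmax_cond (F := fun j : 'I_d => j.+1)); rewrite -E.
apply: (@leq_trans M.+1) => //.
by apply: leq_bigmax_cond.
Qed.

Lemma maxeq (d : nat) (A B : {set 'I_d}) (M : 'I_d) : M \in A -> M \in B ->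
  (forall j : 'I_d, M < j -> (j \in A) = (j \in B)) ->
  \max_(j in A) j.+1 = \max_(j in B) j.+1.
Proof.
move=> MA MB E; apply/eqP; rewrite eqn_leq (maxle MB E) (maxle MA) //.
by move=> j h; rewrite E.
Qed.

Lemma keyn_le (d : nat) (Cs S : {set 'I_d}) (j : 'I_d) :
  j \in Dset Cs S -> j < keyn Cs S.
Proof. by move=> h; apply: (leq_bigmax_cond (F := fun j : 'I_d => j.+1)). Qed.

Lemma keyn0 (d : nat) (Cs S : {set 'I_d}) : keyn Cs S = 0 -> S = Cs.
Proof.
move=> h; apply/setP => j; apply/eqP/negbNE/negP => hj.
have := keyn_le (j := j) (Cs := Cs) (S := S); rewrite h inE hj; by move/(_ isT).
Qed.

Lemma keyn_pos (d : nat) (Cs S : {set 'I_d}) : S != Cs ->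
  exists2 M : 'I_d, M \in Dset Cs S & keyn Cs S = M.+1.
Proof.
move=> h.
have : 0 < #|Dset Cs S|.
  rewrite card_gt0; apply: contraNN h => /eqP E; apply/eqP/setP => j.
  apply/eqP/negbNE/negP => hj.
  have : j \in Dset Cs S by rewrite inE hj.
  by rewrite E inE.
move/(eq_bigmax_cond (fun j : 'I_d => j.+1)) => [M HM E].
by exists M.
Qed.

Lemma keyn_eqC (d : nat) (Cs : {set 'I_d}) : keyn Cs Cs = 0.
Proof. by apply/eqP; rewrite -leqn0; apply/bigmax_leqP => j; rewrite inE eqxx. Qed.

Lemma keyn_Sc (d : nat) (Cs S Sc : {set 'I_d}) : Sc \subset S ->
  (forall a, a \in S :\: Sc -> blk Cs Sc a) -> keyn Cs S = keyn Cs Sc.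
Proof.
move=> sub hb.
case: (eqVneq Sc Cs) => [E|ne].
  suff -> : S = Sc by [].
  apply/eqP; rewrite eqEsubset sub andbT; apply/subsetP => a aS.
  apply/negPn/negP => aSc.
  have := hb a; rewrite inE aSc aS E /blk => /(_ isT) /existsP [j].
  by rewrite eqxx andbF.
have [M HM kM] := keyn_pos ne.
have cl : forall j : 'I_d, M <= j -> (j \in S) = (j \in Sc).
  move=> j hj; case jSc: (j \in Sc); first by rewrite (subsetP sub _ jSc).
  apply/negP => jS.
  have := hb j; rewrite inE jSc jS /blk => /(_ isT) /existsP [j' /andP [lt hj']].
  have := keyn_le (Cs := Cs) (S := Sc) (j := j'); rewrite inE hj' kM => /(_ isT).
  rewrite ltnS => le'; have := leq_ltn_trans hj (leq_trans lt le'); by rewrite ltnn.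
apply: (maxeq (M := M)) => //.
  by rewrite inE cl //; move: HM; rewrite inE.
by move=> j hj; rewrite !inE cl // ltnW.
Qed.

Lemma sim_key (d : nat) (Cs S T : {set 'I_d}) :
  (exists Sc : {set 'I_d}, Sc \subset S :&: T /\
     (forall a, a \in (S :|: T) :\: Sc -> blk Cs Sc a)) <-> keyn Cs S = keyn Cs T.
Proof.
split.
  move=> [Sc [sub hb]].
  rewrite (@keyn_Sc d Cs S Sc) ?(@keyn_Sc d Cs T Sc) //.
  - by apply: subset_trans sub (subsetIr _ _).
  - by move=> a; rewrite !inE => /andP [h1 h2]; apply: hb; rewrite !inE h1 h2 orbT.
  - by apply: subset_trans sub (subsetIl _ _).
  - by move=> a; rewrite !inE => /andP [h1 h2]; apply: hb; rewrite !inE h1 h2.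
move=> E.
case: (eqVneq S Cs) => [eS|nS].
  have eT : T = Cs by apply: keyn0; rewrite -E eS keyn_eqC.
  exists S; split; first by rewrite eT eS setIid.
  by move=> a; rewrite eT eS setUid setDv inE.
have [M HM kM] := keyn_pos nS.
have nT : T != Cs.
  apply/negP => /eqP eT; move/negP: nS; apply; apply/eqP; apply: keyn0.
  by rewrite E eT keyn_eqC.
have [M' HM' kM'] := keyn_pos nT.
have eM : M = M' by apply: val_inj; apply/eqP; rewrite -eqSS -kM -kM' E.
subst M'.
have aboveS : forall j : 'I_d, M < j -> (j \in S) = (j \in Cs).
  move=> j hj; apply/eqP/negbNE/negP => h.
  have := keyn_le (Cs := Cs) (S := S) (j := j); rewrite inE h kM ltnS => /(_ isT).
  by rewrite leqNgt hj.
have aboveT : forall j : 'I_d, M < j -> (j \in T) = (j \in Cs).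
  move=> j hj; apply/eqP/negbNE/negP => h.
  have := keyn_le (Cs := Cs) (S := T) (j := j); rewrite inE h -E kM ltnS => /(_ isT).
  by rewrite leqNgt hj.
move: HM HM'; rewrite !inE => HM HM'.
exists [set j in S :&: T | M <= j]; split.
  by apply/subsetP => j; rewrite !inE => /andP [] /andP [-> ->].
move=> a; rewrite !inE => /andP [na aU].
apply/existsP; exists M; rewrite !inE leqnn andbT.
apply/andP; split.
  rewrite ltnNge; apply/negP => le; move: na; rewrite le andbT.
  case: (ltngtP M a) => [lt|gt|eq].
  - by move: aU; rewrite (aboveS _ lt) (aboveT _ lt); case: (a \in Cs).
  - by move: le; rewrite leqNgt gt.
  have e2 : a = M by apply: val_inj.
  subst a; move: aU HM HM'.
  by case: (M \in S); case: (M \in T); case: (M \in Cs).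
by move: HM HM'; case: (M \in S); case: (M \in T); case: (M \in Cs).
Qed.

Lemma keyn_le_d (d : nat) (Cs S : {set 'I_d}) : keyn Cs S <= d.
Proof. by apply/bigmax_leqP => j _; apply: ltn_ord. Qed.

Lemma keyn_surj (d : nat) (Cs : {set 'I_d}) (k : 'I_d.+1) :
  exists S, keyn Cs S = k.
Proof.
case: k => [[|m] hm]; first by exists Cs; rewrite keyn_eqC.
have hm' : m < d by [].
exists [set j | (j \in Cs) != (j == Ordinal hm')]; rewrite /keyn.
have -> : Dset Cs [set j | (j \in Cs) != (j == Ordinal hm')] = [set Ordinal hm'].
  by apply/setP => j; rewrite !inE; case: (j \in Cs); case: (j == _).
by rewrite big_set1.
Qed.

Lemma count_classes (d : nat) (Cs : {set 'I_d}) (R : {set 'I_d} -> {set 'I_d} -> Prop) :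
  (forall S T, R S T <-> keyn Cs S = keyn Cs T) ->
  #|[set [set T | `[< R S T >]] | S : {set 'I_d}]| = d.+1.
Proof.
move=> HR.
pose cls (k : 'I_d.+1) := [set T | keyn Cs T == k].
have -> : [set [set T | `[< R S T >]] | S : {set 'I_d}] = [set cls k | k in [set: 'I_d.+1]].
  apply/setP => X; apply/imsetP/imsetP => [[S _ ->]|[k _ ->]].
    exists (inord (keyn Cs S)) => //; apply/setP => T; rewrite !inE inordK ?ltnS ?keyn_le_d //.
    by apply/asboolP/eqP => h; [move/HR: h | apply/HR].
  have [S hS] := keyn_surj Cs k.
  exists S => //; apply/setP => T; rewrite !inE -hS.
  by apply/eqP/asboolP => h; [apply/HR | move/HR: h].
rewrite card_in_imset ?cardsT ?card_ord //.
move=> k1 k2 _ _ e.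
have [S hS] := keyn_surj Cs k1.
have : S \in cls k1 by rewrite inE hS.
rewrite e inE hS => /eqP h; exact: val_inj.
Qed.

Definition fv (d : nat) (i : nat) : 'I_d.+1 := if i == 0 then ord0 else inord (d.+1 - i).

Lemma val_fv (d i : nat) : nat_of_ord (fv d i) = if i == 0 then 0 else d.+1 - i.
Proof. by rewrite /fv; case: i => //= i; rewrite inordK //; lia. Qed.

Lemma adj0 (d : nat) (dir bi : rel 'I_d.+1) :
  (forall u v, adj dir bi u v = path_skel u v) -> 0 < d ->
  forall w, adj dir bi (fv d 0) w -> w = fv d 1.
Proof.
move=> hps hd w; rewrite hps /path_skel /= => h; apply: val_inj.
move: h; rewrite /= !val_fv /=; move: (ltn_ord w); lia.
Qed.

Lemma adjk (d : nat) (dir bi : rel 'I_d.+1) :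
  (forall u v, adj dir bi u v = path_skel u v) -> forall k w, 0 < k <= d ->
  adj dir bi (fv d k) w -> w = fv d k.-1 \/ (k < d /\ w = fv d k.+1).
Proof.
move=> hps k w hk; rewrite hps /path_skel /= => h.
have : val w = val (fv d k.-1) \/ (k < d /\ val w = val (fv d k.+1)).
  move: h; rewrite /= !val_fv; move: (ltn_ord w) hk.
  case: k => [|[|k]] /=; lia.
by case=> [e|[e1 e2]]; [left; apply: val_inj | right; split => //; apply: val_inj].
Qed.

Lemma adj_next (d : nat) (dir bi : rel 'I_d.+1) :
  (forall u v, adj dir bi u v = path_skel u v) -> forall k, k < d ->
  adj dir bi (fv d k) (fv d k.+1).
Proof.
move=> hps k hk; rewrite hps /path_skel /= !val_fv.
move: hk; case: k => [|k] /=; lia.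
Qed.

Lemma path_down (d : nat) (dir bi : rel 'I_d.+1) :
  (forall u v, adj dir bi u v = path_skel u v) -> forall q k, 0 < k <= d ->
  uniq (fv d k.-1 :: fv d k :: q) -> path (adj dir bi) (fv d k) q ->
  q = map (fv d) (iota k.+1 (size q)).
Proof.
move=> hps; elim=> [//|y q IH] k hk U /= /andP [hy hp].
case: (adjk hps hk hy) => [ey|[lt ey]].
  by move: U; rewrite ey /= !inE eqxx orbT.
subst y.
have hk' : 0 < k.+1 <= d by lia.
have U' : uniq (fv d k :: fv d k.+1 :: q) by case/andP: U.
have E := IH k.+1 hk' U' hp.
by rewrite {1}E.
Qed.

Lemma last_fv (T : Type) (f : nat -> T) n k :
  last (f k) (map f (iota k.+1 n)) = f (k + n).
Proof.
elim: n k => [|n IH] k /=; first by rewrite addn0.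
by rewrite IH addSnnS.
Qed.

Lemma is_path_canon (d : nat) (dir bi : rel 'I_d.+1) :
  (forall u v, adj dir bi u v = path_skel u v) -> 0 < d ->
  forall v p, v != ord0 -> is_path dir bi ord0 v p ->
  exists n, p = map (fv d) (iota 0 n.+2) /\ v = fv d n.+1.
Proof.
move=> hps hd v p nv [[|y q] [-> hl hp hu]].
  by move: nv; rewrite -hl eqxx.
move: hp => /= /andP [hy hp].
have ey := adj0 hps hd hy; subst y.
have h1 : 0 < 1 <= d by rewrite hd.
have E := path_down hps h1 hu hp.
exists (size q); split; first by rewrite {1}E.
by rewrite -hl /= {1}E last_fv.
Qed.

Lemma triples_map (m : nat) (f : nat -> 'I_m) (P : 'I_m -> 'I_m -> 'I_m -> bool) (n k : nat) :
  triples_ok P (map f (iota k n.+2)) = all (fun i => P (f i) (f i.+1) (f i.+2)) (iota k n).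
Proof.
elim: n k => [//|n IH] k.
by rewrite [RHS]/= -IH.
Qed.

Lemma noout (d : nat) (dir bi : rel 'I_d.+1) :
  (forall u v, adj dir bi u v = path_skel u v) -> wf_mixed dir bi ->
  forall k z, 0 < k <= d ->
  collider dir bi (fv d k.-1) (fv d k) (fv d k.+1) ->
  anc dir (fv d k) z = (z == fv d k).
Proof.
move=> hps [_ hsym hdd hdb] k z hk hc.
apply/idP/eqP => [|->]; last exact: connect0.
move/connectP => [[|w p] /=]; first by move=> _ ->.
move=> /andP [hw _] _; exfalso.
have ha : adj dir bi (fv d k) w by rewrite /adj hw.
move: hc; rewrite /collider /arrowhead.
have H : ~~ (dir w (fv d k) || bi w (fv d k)).
  rewrite negb_or; apply/andP; split.
    by apply/negP => h; move: (hdd (fv d k) w); rewrite hw h.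
  by apply/negP => h; move: (hdb (fv d k) w); rewrite hw hsym h.
case: (adjk hps hk ha) => [e|[_ e]]; subst w.
  by rewrite (negbTE H).
by rewrite (negbTE H) andbF.
Qed.

Definition Cset (d : nat) (dir bi : rel 'I_d.+1) : {set 'I_d} :=
  [set j : 'I_d | (0 < j) && collider dir bi (fv d (d - j).-1) (fv d (d - j)) (fv d (d - j).+1)].

Lemma fv_X (d : nat) (j : 'I_d) : fv d (d - j) = Xv j.
Proof.
apply: val_inj; rewrite /= val_fv; have := ltn_ord j.
rewrite /bump leq0n add1n; case: ifP => /eqP; lia.
Qed.

Lemma P_at (d : nat) (dir bi : rel 'I_d.+1) :
  (forall u v, adj dir bi u v = path_skel u v) -> wf_mixed dir bi ->
  forall (Sc : {set 'I_d}) (j : 'I_d), 0 < j ->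
  (fun a c b => if collider dir bi a c b then
       [exists z in Xv @: Sc, anc dir c z] else c \notin Xv @: Sc)
    (fv d (d - j).-1) (fv d (d - j)) (fv d (d - j).+1)
  = ((j \in Sc) == (j \in Cset dir bi)).
Proof.
move=> hps hwf Sc j hj /=.
have hk : 0 < d - j <= d by have := ltn_ord j; lia.
rewrite /Cset inE hj /=.
case hc: (collider _ _ _ _ _); last by rewrite fv_X mem_imset ?eqbF_neg //; exact: lift_inj.
rewrite eqb_id.
apply/existsP/idP => [[z /andP [zZ]]|h].
  rewrite (noout hps hwf _ hk hc) => /eqP ez; subst z.
  by move: zZ; rewrite fv_X mem_imset //; exact: lift_inj.
exists (fv d (d - j)); rewrite /anc connect0 andbT fv_X mem_imset //; exact: lift_inj.
Qed.

Lemma path_iota (d : nat) (dir bi : rel 'I_d.+1) :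
  (forall u v, adj dir bi u v = path_skel u v) ->
  forall m k, k + m <= d -> path (adj dir bi) (fv d k) (map (fv d) (iota k.+1 m)).
Proof.
move=> hps; elim=> [//|m IH] k hk /=.
rewrite adj_next //; last by lia.
by apply: IH; lia.
Qed.

Lemma uniq_fv (d n : nat) : n <= d -> uniq (map (fv d) (iota 0 n.+1)).
Proof.
move=> hn; rewrite map_inj_in_uniq ?iota_uniq // => x y.
rewrite !mem_iota !add0n => hx hy e.
have := congr1 val e; rewrite /= !val_fv.
case: x hx {e} => [|x]; case: y hy => [|y] /=; lia.
Qed.

Lemma msep_blk (d : nat) (dir bi : rel 'I_d.+1) :
  (forall u v, adj dir bi u v = path_skel u v) -> 0 < d -> wf_mixed dir bi ->
  forall (Sc : {set 'I_d}) (a : 'I_d),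
  msep dir bi [set Yv] [set Xv a] (Xv @: Sc) <-> blk (Cset dir bi) Sc a.
Proof.
move=> hps hd hwf Sc a; split.
  move=> H; case: (boolP (blk (Cset dir bi) Sc a)) => // nb; exfalso.
  have hall : forall j : 'I_d, a < j -> (j \in Sc) = (j \in Cset dir bi).
    move=> j hj; apply/eqP/negbNE/negP => hne.
    by move/negP: nb; apply; apply/existsP; exists j; rewrite hj hne.
  pose n := d - a.+1.
  have hp : is_path dir bi Yv (Xv a) (map (fv d) (iota 0 n.+2)).
    exists (map (fv d) (iota 1 n.+1)); split => //.
    - change Yv with (fv d 0); rewrite last_fv add0n -fv_X; congr fv.
      have := ltn_ord a; rewrite /n; lia.
    - change Yv with (fv d 0); apply: path_iota => //.
      have := ltn_ord a; rewrite /n; lia.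
    - change (uniq (map (fv d) (iota 0 n.+2))); apply: uniq_fv.
      have := ltn_ord a; rewrite /n; lia.
  have := H Yv (Xv a) _ (set11 _) (set11 _) hp.
  rewrite /mconnecting triples_map; apply/negP; rewrite negbK; apply/allP => i.
  rewrite mem_iota add0n => /andP [_ hi].
  have hj : d - i.+1 < d by lia.
  have hj0 : 0 < Ordinal hj by rewrite /=; lia.
  have ei : i = (d - Ordinal hj).-1 by rewrite /=; lia.
  have hpos : 0 < d - Ordinal hj by rewrite /=; lia.
  rewrite ei prednK //.
  move: (P_at hps hwf Sc hj0) => /= ->.
  rewrite hall //= /n; lia.
move=> /existsP [j /andP [hj hne]] x y p; rewrite !inE => /eqP -> /eqP -> hp.
have nv : Xv a != ord0 by rewrite /Xv eq_sym neq_lift.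
have [m [ep ev]] := is_path_canon hps hd nv hp; subst p.
have em : m = d - a.+1.
  have := congr1 val ev; rewrite /= val_fv /= /bump leq0n add1n; have := ltn_ord a; lia.
rewrite /mconnecting triples_map; apply/negP => /allP H.
have hi : (d - j).-1 \in iota 0 m by rewrite mem_iota add0n em; have := ltn_ord j; lia.
have hpos : 0 < d - j by have := ltn_ord j; lia.
have hj0 : 0 < j by lia.
move: (H _ hi) => /=; rewrite prednK //.
move: (P_at hps hwf Sc hj0) => /= ->.
by rewrite (negbTE hne).
Qed.

Lemma msep_set (d : nat) (dir bi : rel 'I_d.+1) (U Z : {set 'I_d}) :
  msep dir bi [set Yv] (Xv @: U) (Xv @: Z) <->
  (forall a, a \in U -> msep dir bi [set Yv] [set Xv a] (Xv @: Z)).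
Proof.
split.
  move=> H a aU x y p hx; rewrite inE => /eqP ->; apply: H => //.
  exact: imset_f.
move=> H x y p hx /imsetP [a aU ->]; exact: (H a aU x (Xv a) p hx (set11 _)).
Qed.

Theorem mainTheorem9 (d : nat) (dir bi : rel 'I_d.+1) :
  0 < d ->
  (is_DAG dir bi \/ is_MAG dir bi) ->
  (forall u v, adj dir bi u v = path_skel u v) ->
  N_G dir bi = d.+1.
Proof.
move=> hd hG hps.
have hwf : wf_mixed dir bi by case: hG => [[]|[]].
apply: (count_classes (Cs := Cset dir bi)) => S T.
rewrite -sim_key /simG; split.
  move=> [Sc [sub H]]; exists Sc; split => // a aU.
  by apply/(msep_blk hps hd hwf); move/msep_set: H; apply.
move=> [Sc [sub H]]; exists Sc; split => //.
by apply/msep_set => a aU; apply/(msep_blk hps hd hwf); apply: H.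
Qed.
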